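(* Under the standing setup, let $u\in\widetilde X\setminus\overline X$, let $z^*$ be as in the hypothesis below, set $r_u=\min\{1,\frac{\varepsilon\|u-u_{NN}\|}{480}\}$, and for $v\in B(u,r_u)\cap\widetilde X$ set $\delta_v=\frac{240\|u-v\|}{\varepsilon\|u-u_{NN}\|}$ and $z_v=(1-\delta_v)\beta(u)+\delta_vz^*$. Then $\tilde g_i(z_v,v)\le0$ for all $i=1,\ldots,2\ell$, i.e., $z_v\in\widetilde F_v$ (in particular $\|\beta(v)\|\le\|z_v\|$).
   Context: Norms are Euclidean; $B(x,r)$ is the open ball. Standing setup: $X\subseteq\mathbb{R}^d$ has reach $\tau_X>0$, where $\tau_X=\sup\{t\ge0:\text{every }x\text{ with }d(x,X)<t\text{ has a unique closest point in }\overline X\}$; $\widetilde X=X+B(0,\tau_X/2)$; for $u\in\widetilde X$, $u_{NN}$ is the unique closest point to $u$ in $\overline X$, and it is a known fact that $\|u_{NN}-v_{NN}\|\le2\|u-v\|$ for all $u,v\in\widetilde X$. $\varepsilon\in(0,1)$. $S_X=\overline{\{(x-y)/\|x-y\|:x\ne y\in X\}}$. A linear $\Pi$ provides $\eta$-convex hull distortion for $T\subseteq S^{d-1}$ if $|\,\|\Pi x\|-\|x\|\,|<\eta$ for all $x\in\operatorname{conv}(T)$. $\mathcal C=\{w_1,\ldots,w_\ell\}\subseteq S_X$ is finite with every $v\in S_X$ within distance $<\varepsilon/40$ of some $w_i$; $\Pi\in\mathbb{R}^{m\times d}$ provides $\frac{\varepsilon}{240}$-convex hull distortion for $S_X$.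 For $z\in\mathbb{R}^m$, $u\in\widetilde X$, $i=1,\ldots,\ell$: $\tilde g_i(z,u)=\langle z,\Pi w_i\rangle-\langle u-u_{NN},w_i\rangle-\frac{\varepsilon}{30}\|u-u_{NN}\|$, $\tilde g_{\ell+i}(z,u)=\langle u-u_{NN},w_i\rangle-\langle z,\Pi w_i\rangle-\frac{\varepsilon}{30}\|u-u_{NN}\|$; $\widetilde F_u=\{z:\tilde g_i(z,u)\le0\ \forall i\}$; $\beta(u)=\arg\min_{z\in\widetilde F_u}\|z\|$. Hypothesis on $z^*$: $z^*\in\mathbb{R}^m$ is any point with $\|z^*\|\le\|u-u_{NN}\|$ and $\tilde g_i(z^*,u)\le-\frac{\varepsilon}{60}\|u-u_{NN}\|$ for all $i=1,\ldots,2\ell$ (such a point exists). *)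

(* Defs.v *)
From HB Require Import structures.
From mathcomp Require Import all_boot all_order all_algebra.
From mathcomp Require Import all_classical all_reals ereal.
Set Implicit Arguments. Unset Strict Implicit. Unset Printing Implicit Defensive.
Import Order.TTheory GRing.Theory Num.Theory.
Local Open Scope classical_set_scope.
Local Open Scope ring_scope.

Section Defs.
Variable R : realType.

Definition dotv n (x y : 'rV[R]_n) : R := \sum_(i < n) x ord0 i * y ord0 i.
Definition enorm n (x : 'rV[R]_n) : R := Num.sqrt (dotv x x).

Definition eclosure n (A : set 'rV[R]_n) : set 'rV[R]_n :=
  [set x | forall e : R, 0 < e -> exists2 y, A y & enorm (x - y) < e].

(* distance from x to A, as an extended real (+oo if A is empty). *)
Definition edist n (x : 'rV[R]_n) (A : set 'rV[R]_n) : \bar R :=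
  ereal_inf [set (enorm (x - y))%:E | y in A].

Definition is_closest n (A : set 'rV[R]_n) (x p : 'rV[R]_n) : Prop :=
  eclosure A p /\ forall q, eclosure A q -> enorm (x - p) <= enorm (x - q).

Definition reach n (X : set 'rV[R]_n) : \bar R :=
  ereal_sup [set t%:E | t in [set t : R | 0 <= t /\
     forall x, (edist x X < t%:E)%E -> exists! p, is_closest X x p]].

Definition Xtilde n (X : set 'rV[R]_n) : set 'rV[R]_n :=
  [set x | exists2 y, X y & ((enorm (x - y))%:E < reach X * (2^-1)%:E)%E].

(* u_NN: the (unique, on X~) closest point of closure X to u. *)
Definition nn n (X : set 'rV[R]_n) (u : 'rV[R]_n) : 'rV[R]_n :=
  xget 0 [set p | is_closest X u p].

Definition SX n (X : set 'rV[R]_n) : set 'rV[R]_n :=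
  eclosure [set z | exists x y, [/\ X x, X y, x <> y & z = (enorm (x - y))^-1 *: (x - y)]].

Definition conv n (T : set 'rV[R]_n) : set 'rV[R]_n :=
  [set x | exists k (c : 'I_k -> R) (p : 'I_k -> 'rV[R]_n),
     (forall i, 0 <= c i) /\ \sum_(i < k) c i = 1 /\ (forall i, T (p i)) /\
     x = \sum_(i < k) c i *: p i].

Definition hull_distortion d m (Pi : 'M[R]_(d, m)) (eta : R) (T : set 'rV[R]_d) :=
  forall x, conv T x -> `| enorm (x *m Pi) - enorm x | < eta.

Definition g1 d m l (X : set 'rV[R]_d) (Pi : 'M[R]_(d, m)) (w : 'I_l -> 'rV[R]_d)
  (eps : R) (i : 'I_l) (z : 'rV[R]_m) (u : 'rV[R]_d) : R :=
  dotv z (w i *m Pi) - dotv (u - nn X u) (w i) - eps / 30 * enorm (u - nn X u).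
Definition g2 d m l (X : set 'rV[R]_d) (Pi : 'M[R]_(d, m)) (w : 'I_l -> 'rV[R]_d)
  (eps : R) (i : 'I_l) (z : 'rV[R]_m) (u : 'rV[R]_d) : R :=
  dotv (u - nn X u) (w i) - dotv z (w i *m Pi) - eps / 30 * enorm (u - nn X u).

Definition Ftilde d m l (X : set 'rV[R]_d) (Pi : 'M[R]_(d, m)) (w : 'I_l -> 'rV[R]_d)
  (eps : R) (u : 'rV[R]_d) : set 'rV[R]_m :=
  [set z | forall i, g1 X Pi w eps i z u <= 0 /\ g2 X Pi w eps i z u <= 0].

(* b is the minimum-norm point of F (beta(u) = argmin over F~_u). *)
Definition is_min_norm m (F : set 'rV[R]_m) (b : 'rV[R]_m) : Prop :=
  F b /\ forall z, F z -> enorm b <= enorm z.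

End Defs.

(* Main.v *)
Require Import Defs.
From HB Require Import structures.
From mathcomp Require Import all_boot all_order all_algebra.
From mathcomp Require Import all_classical all_reals ereal.
From mathcomp Require Import ring lra.
Import Order.TTheory GRing.Theory Num.Theory.
Set Implicit Arguments. Unset Strict Implicit.
Local Open Scope ring_scope.
Section H.
Variable R : realType.
Variable n : nat.
Implicit Types x y z : 'rV[R]_n.
Lemma dotDl x y z : dotv (x + y) z = dotv x z + dotv y z.
Proof. rewrite /dotv -big_split /=; apply: eq_bigr => i _; rewrite !mxE; ring. Qed.
Lemma dotZl (c : R) x z : dotv (c *: x) z = c * dotv x z.
Proof. rewrite /dotv mulr_sumr; apply: eq_bigr => i _; rewrite !mxE; ring. Qed.
Lemma dotNl x z : dotv (- x) z = - dotv x z.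
Proof. by rewrite -scaleN1r dotZl mulN1r. Qed.
Lemma dotC x y : dotv x y = dotv y x.
Proof. rewrite /dotv; apply: eq_bigr => i _; ring. Qed.
Lemma dotBl x y z : dotv (x - y) z = dotv x z - dotv y z.
Proof. by rewrite dotDl dotNl. Qed.
Lemma dot_ge0 x : 0 <= dotv x x.
Proof. rewrite /dotv; apply: sumr_ge0 => i _; by rewrite -expr2 sqr_ge0. Qed.
Lemma dot_eq0 x : dotv x x = 0 -> x = 0.
Proof.
move=> /eqP; rewrite /dotv psumr_eq0 => [/allP H|i _]; last by rewrite -expr2 sqr_ge0.
apply/rowP => i; rewrite mxE; apply/eqP; rewrite -sqrf_eq0 expr2.
by have := H i (mem_index_enum _); rewrite implyTb.
Qed.
Lemma enorm_ge0 x : 0 <= enorm x.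
Proof. exact: sqrtr_ge0. Qed.
Lemma enorm_sq x : enorm x ^+ 2 = dotv x x.
Proof. by rewrite /enorm sqr_sqrtr // dot_ge0. Qed.
Lemma enormZ (c : R) x : enorm (c *: x) = `|c| * enorm x.
Proof.
rewrite /enorm dotZl dotC dotZl mulrA sqrtrM ?sqr_ge0 //.
by rewrite -expr2 sqrtr_sqr.
Qed.
Lemma enormN x : enorm (- x) = enorm x.
Proof. by rewrite -scaleN1r enormZ normrN normr1 mul1r. Qed.
Lemma enormB x y : enorm (x - y) = enorm (y - x).
Proof. by rewrite -enormN opprB. Qed.
Lemma CS x y : dotv x y <= enorm x * enorm y.
Proof.
have [nx0|nxp] := eqVneq (enorm x) 0.
  have : dotv x x = 0 by rewrite -enorm_sq nx0 expr0n.
  move/dot_eq0 => ->; rewrite -(scale0r 0) dotZl mul0r.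
  by rewrite mulr_ge0 // enorm_ge0.
have [ny0|nyp] := eqVneq (enorm y) 0.
  have : dotv y y = 0 by rewrite -enorm_sq ny0 expr0n.
  move/dot_eq0 => ->; rewrite dotC -(scale0r 0) dotZl mul0r.
  by rewrite mulr_ge0 // enorm_ge0.
have hx : 0 < enorm x by rewrite lt_def nxp enorm_ge0.
have hy : 0 < enorm y by rewrite lt_def nyp enorm_ge0.
have := dot_ge0 (enorm y *: x - enorm x *: y).
rewrite !dotBl !(dotC _ (_ - _)) !dotBl !dotZl !(dotC _ (_ *: _)) !dotZl.
rewrite -!enorm_sq (dotC y x) => H.
have hxy : 0 < enorm x * enorm y by exact: mulr_gt0.
nra.
Qed.
Lemma absdot x y : `|dotv x y| <= enorm x * enorm y.
Proof.
rewrite ler_norml CS andbT -lerNl -dotNl -(enormN x); exact: CS.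
Qed.
Lemma triangle x y : enorm (x + y) <= enorm x + enorm y.
Proof.
rewrite -(ler_pXn2r (_ : 0 < 2)%N) ?nnegrE ?addr_ge0 ?enorm_ge0 //.
rewrite enorm_sq dotDl !(dotC _ (_ + _)) !dotDl -!enorm_sq (dotC y x).
have := CS x y; nra.
Qed.
Lemma triangleB x y : enorm (x - y) <= enorm x + enorm y.
Proof. by rewrite -(enormN y) triangle. Qed.
Lemma revtri x y : enorm x - enorm y <= enorm (x - y).
Proof. have := triangle (x - y) y; rewrite subrK; lra. Qed.
End H.
Local Open Scope classical_set_scope.
Lemma SX_norm (R : realType) d (X : set 'rV[R]_d) w : SX X w -> enorm w <= 1.
Proof.
move=> H; rewrite leNgt; apply/negP => Hw.
have [y [x [y' [_ _ nxy ->]]] Hy] := H (enorm w - 1) (ltac:(lra)).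
have N0 : enorm (x - y') != 0.
  apply/negP => /eqP N0; apply: nxy; apply/eqP; rewrite -subr_eq0; apply/eqP.
  by apply: dot_eq0; rewrite -enorm_sq N0 expr0n.
have e1 : enorm ((enorm (x - y'))^-1 *: (x - y')) = 1.
  by rewrite enormZ ger0_norm ?invr_ge0 ?enorm_ge0 // mulVf.
have := triangle (w - (enorm (x - y'))^-1 *: (x - y')) ((enorm (x - y'))^-1 *: (x - y')).
rewrite subrK e1; lra.
Qed.

Theorem lemma4p4 (R : realType) (d m l : nat) (X : set 'rV[R]_d) (eps : R)
  (w : 'I_l -> 'rV[R]_d) (Pi : 'M[R]_(d, m))
  (u : 'rV[R]_d) (zs bu : 'rV[R]_m) :
  (0 < reach X)%E ->
  (forall a b, Xtilde X a -> Xtilde X b ->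
     enorm (nn X a - nn X b) <= 2 * enorm (a - b)) ->
  0 < eps < 1 ->
  (forall i, SX X (w i)) ->
  (forall v, SX X v -> exists i, enorm (v - w i) < eps / 40) ->
  hull_distortion Pi (eps / 240) (SX X) ->
  Xtilde X u -> ~ eclosure X u ->
  enorm zs <= enorm (u - nn X u) ->
  (forall i, g1 X Pi w eps i zs u <= - (eps / 60 * enorm (u - nn X u)) /\
             g2 X Pi w eps i zs u <= - (eps / 60 * enorm (u - nn X u))) ->
  is_min_norm (Ftilde X Pi w eps u) bu ->
  let r_u := Num.min 1 (eps * enorm (u - nn X u) / 480) in
  forall v, Xtilde X v -> enorm (u - v) < r_u ->
  let delta := 240 * enorm (u - v) / (eps * enorm (u - nn X u)) in
  let zv := (1 - delta) *: bu + delta *: zs in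
  Ftilde X Pi w eps v zv /\
  (forall bv, is_min_norm (Ftilde X Pi w eps v) bv -> enorm bv <= enorm zv).
Proof.
move=> _ Lip /andP[e0 e1] Sw _ _ Xu _ _ Hzs [Fbu _] r_u v Xv.
move=> Htv delta zv; move: Htv; rewrite /r_u lt_min => /andP[_ Htv].
set a := enorm (u - nn X u) in Hzs Htv delta zv *.
set t := enorm (u - v) in Htv delta zv *.
have t0 : 0 <= t by exact: enorm_ge0.
have a0 : 0 <= a by exact: enorm_ge0.
have ea : 0 < eps * a by lra.
have dea : delta * (eps * a) = 240 * t by rewrite /delta divfK // gt_eqF.
have del0 : 0 <= delta by rewrite /delta divr_ge0 // ?mulr_ge0 //; lra.
have del1 : delta <= 1.
  rewrite /delta ler_pdivrMr // mul1r; lra.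
set A := u - nn X u. set B := v - nn X v.
have AB : enorm (A - B) <= 3 * t.
  have -> : A - B = (u - v) - (nn X u - nn X v) by rewrite /A /B; apply/rowP => i; rewrite !mxE; ring.
  have := triangleB (u - v) (nn X u - nn X v); have := Lip _ _ Xu Xv; rewrite -/t => h1 h2; lra.
have nAB : a - enorm B <= 3 * t by have := revtri A B; rewrite /A -/a; lra.
have FF : Ftilde X Pi w eps v zv.
  move=> i; have [b1 b2] := Fbu i; have [s1 s2] := Hzs i.
  move: b1 b2 s1 s2; rewrite /g1 /g2 -/A -/B -/a.
  have dAB := absdot (A - B) (w i); rewrite dotBl in dAB.
  have nw := SX_norm (Sw i).
  have : enorm (A - B) * enorm (w i) <= 3 * t.
    apply: le_trans (_ : enorm (A - B) * 1 <= _); last by lra.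
    by apply: ler_wpM2l => //; exact: enorm_ge0.
  rewrite ler_norml in dAB; case/andP: dAB => dAB1 dAB2.
  rewrite /zv (dotDl ((1 - delta) *: bu)) !dotZl.
  set p := dotv bu (w i *m Pi). set q := dotv zs (w i *m Pi).
  set dA := dotv A (w i) in dAB1 dAB2 *. set dB := dotv B (w i) in dAB1 dAB2 *. set nB := enorm B in nAB *.
  move=> h3 b1 b2 s1 s2.
  have k1 : (1 - delta) * p <= (1 - delta) * (dA + eps / 30 * a)
    by apply: ler_wpM2l; lra.
  have k2 : delta * q <= delta * (dA + eps / 30 * a - eps / 60 * a)
    by apply: ler_wpM2l; lra.
  have k3 : (1 - delta) * p >= (1 - delta) * (dA - eps / 30 * a)
    by apply: ler_wpM2l; lra.
  have k4 : delta * q >= delta * (dA - eps / 30 * a + eps / 60 * a)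
    by apply: ler_wpM2l; lra.
  have k5 : eps / 30 * (a - nB) <= eps / 30 * (3 * t) by apply: ler_wpM2l; lra.
  have k6 : eps * t <= 1 * t by apply: ler_wpM2r => //; lra.
  split; lra.
split => // bv [_ H]; exact: H.
Qed.
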